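(* Let $\|\cdot\|$ be a norm on $\mathbb{R}^d$ and let $Q$ be a collection of finite subsets of $\mathbb{R}^d$, each with at least $2$ elements. Let $E_0=\{e\subseteq\mathbb{R}^d\mid e \text{ is congruent to some } f\in Q\}$. For each $t\in\mathbb{Z}^+$ let $B_t=\{f\cup T\mid f\in Q,\ T\subseteq\mathbb{R}^d,\ f\cap T=\emptyset,\ |T|=t\}$ and $E_t=\{e\subseteq\mathbb{R}^d\mid e \text{ is congruent to some } g\in B_t\}$. Let $\mathcal{H}_0=(\mathbb{R}^d,E_0)$ and $\mathcal{H}_t=(\mathbb{R}^d,E_t)$. If $\chi(\mathcal{H}_0)<\infty$, then $\chi(\mathcal{H}_t)=\chi(\mathcal{H}_0)$ for every $t\in\mathbb{Z}^+$.
   Context: Congruence is in $(\mathbb{R}^d,\|\cdot\|)$: two sets are congruent iff one is the image of the other under a composition, in either order, of a surjective linear isometry of $(\mathbb{R}^d,\|\cdot\|)$ and a translation. A hypergraph $(V,E)$ has edges that are subsets of $V$ of size at least $2$; a proper coloring makes no edge monochromatic; $\chi$ is the least number of colors of a proper coloring. $\mathbb{Z}^+$ denotes the positive integers. *)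

(* Defs.v *)
From HB Require Import structures.
From mathcomp Require Import all_boot all_order all_algebra.
From mathcomp Require Import boolp classical_sets cardinality reals.
Set Implicit Arguments. Unset Strict Implicit. Unset Printing Implicit Defensive.
Import Order.TTheory GRing.Theory Num.Theory.
Local Open Scope ring_scope.
Local Open Scope classical_set_scope.

Definition is_norm (R : realType) (d : nat) (N : 'rV[R]_d -> R) : Prop :=
  [/\ (forall x, N x = 0 -> x = 0),
      (forall (a : R) x, N (a *: x) = `|a| * N x) &
      (forall x y, N (x + y) <= N x + N y)].

Definition lin_isometry (R : realType) (d : nat) (N : 'rV[R]_d -> R)
  (f : 'rV[R]_d -> 'rV[R]_d) : Prop :=
  [/\ (forall (a : R) x y, f (a *: x + y) = a *: f x + f y),
      (forall y, exists x, f x = y) &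
      (forall x, N (f x) = N x)].

Definition congruent (R : realType) (d : nat) (N : 'rV[R]_d -> R)
  (A B : set 'rV[R]_d) : Prop :=
  exists (f : 'rV[R]_d -> 'rV[R]_d) (v : 'rV[R]_d), lin_isometry N f /\
    (B = (fun x => f x + v) @` A \/ B = (fun x => f (x + v)) @` A).

Definition has_card (T : eqType) (A : set T) (t : nat) : Prop :=
  exists s : seq T, [/\ uniq s, size s = t & A = [set x | x \in s]].

Definition proper_coloring (V : Type) (E : set (set V)) (k : nat)
  (c : V -> 'I_k) : Prop :=
  forall e, E e -> ~ (exists i : 'I_k, forall x, e x -> c x = i).

Definition colorable (V : Type) (E : set (set V)) (k : nat) : Prop :=
  exists c : V -> 'I_k, proper_coloring E c.

Definition chromatic_number_is (V : Type) (E : set (set V)) (n : nat) : Prop :=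
  colorable E n /\ forall m, colorable E m -> (n <= m)%N.

Definition E0 (R : realType) (d : nat) (N : 'rV[R]_d -> R)
  (Q : set (set 'rV[R]_d)) : set (set 'rV[R]_d) :=
  [set e | exists f, Q f /\ congruent N f e].

Definition Bt (R : realType) (d : nat) (Q : set (set 'rV[R]_d)) (t : nat)
  : set (set 'rV[R]_d) :=
  [set g | exists f T, [/\ Q f, f `&` T = set0, has_card T t & g = f `|` T]].

Definition Et (R : realType) (d : nat) (N : 'rV[R]_d -> R)
  (Q : set (set 'rV[R]_d)) (t : nat) : set (set 'rV[R]_d) :=
  [set e | exists g, Bt Q t g /\ congruent N g e].

(* Main.v *)
Require Import Defs.
From HB Require Import structures.
From mathcomp Require Import all_boot all_order all_algebra.
From mathcomp Require Import boolp classical_sets cardinality reals filter.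
Import Order.TTheory GRing.Theory Num.Theory.
Local Open Scope ring_scope.
Local Open Scope classical_set_scope.
Set Implicit Arguments.
Lemma filter_seqI (T I : eqType) (U : set_system T) (P : I -> set T)
  (l : seq I) : Filter U -> (forall i, U (P i)) ->
  U [set s | forall i, i \in l -> P i s].
Proof.
move=> FU HP; elim: l => [|a l IH].
  by apply: filterS (filterT) => s _ i.
apply: filterS (filterI (HP a) IH) => s [Pa Pl] i.
by rewrite in_cons => /orP [/eqP -> //|/Pl].
Qed.

Lemma compactness (V : eqType) (k : nat) (E : set (set V)) :
  (forall e, E e -> exists s : seq V, e `<=` [set` s]) ->
  (forall s : seq V, exists c : V -> 'I_k, forall e, E e -> e `<=` [set` s] ->
       ~ (exists i, forall x, e x -> c x = i)) ->
  colorable E k.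
Proof.
move=> Efin /choice [cS HcS].
pose B := fun s : seq V => [set s' : seq V | {subset s <= s'}].
have F0F : Filter (filter_from setT B).
  apply: filter_from_filter; first by exists [::].
  move=> i j _ _; exists (i ++ j) => // s' Hs'; split => x Hx; apply: Hs';
    by rewrite mem_cat Hx ?orbT.
have F0P : ProperFilter (filter_from setT B).
  by apply: filter_from_proper => // s _; exists s.
have [U [UU F0U]] := ultraFilterLemma F0P.
have UF : Filter U by case: UU => [[]].
have UP : ProperFilter U by case: UU.
have Hx : forall x, exists j, U [set s | cS s x = j].
  move=> x; apply: contrapT => Hn.
  have HC : forall j, U (~` [set s | cS s x = j]).
    move=> j; case: (in_ultra_setVsetC [set s | cS s x = j] UU) => // Hj.
    by exfalso; apply: Hn; exists j.
  have := @filter_seqI _ _ U _ (enum 'I_k) UF HC.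
  move=> /filter_ex [s Hs]; apply: (Hs (cS s x)) => //.
  by rewrite mem_enum.
have [c Hc] := choice Hx.
exists c => e Ee [i Hi].
have [se Hse] := Efin e Ee.
have HU1 : U (B se) by apply: F0U; exists se.
have HU2 := @filter_seqI _ _ U _ se UF (fun x => Hc x).
have [s' [Hs'1 Hs'2]] := filter_ex (filterI HU1 HU2).
apply: (HcS s' e Ee).
  by move=> x /Hse /= /Hs'1.
exists i => x ex; rewrite (Hs'2 x) ?Hi //.
exact: Hse.
Qed.
Section Geo.
Variables (R : realType) (d : nat) (N : 'rV[R]_d -> R) (Q : set (set 'rV[R]_d)).
Local Notation V := 'rV[R]_d.

Lemma cong_form (A B : set V) : congruent N A B ->
  exists f v, lin_isometry N f /\ B = (fun x => f x + v) @` A.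
Proof.
rewrite /congruent /lin_isometry => -[f [v [Hf [->|->]]]]; first by exists f, v.
exists f, (f v); split; first by [].
congr (_ @` _); apply: funext => x.
by case: Hf => lin _ _; rewrite -{1}[x]scale1r lin scale1r.
Qed.

Lemma E0_trans (e : set V) (w : V) : E0 N Q e -> E0 N Q ((fun x => x + w) @` e).
Proof.
move=> [f [Qf /cong_form [g [v [Hg ->]]]]].
exists f; split => //; exists g, (v + w); split => //; left.
apply/seteqP; split => y /=.
  by move=> [_ [x fx <-] <-]; exists x => //; rewrite addrA.
by move=> [x fx <-]; exists (g x + v); [exists x|rewrite addrA].
Qed.

Lemma E0_fin (e : set V) : (forall f, Q f -> finite_set f) -> E0 N Q e -> finite_set e.
Proof.
move=> HQ [f [Qf /cong_form [g [v [Hg ->]]]]].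
exact: finite_image (HQ f Qf).
Qed.

Lemma E0_ne (e : set V) : (forall f, Q f -> exists x, f x) -> E0 N Q e -> exists x, e x.
Proof.
move=> HQ [f [Qf /cong_form [g [v [Hg ->]]]]].
by have [x fx] := HQ f Qf; exists (g x + v), x.
Qed.

Lemma Et_sub (t : nat) (e : set V) : Et N Q t e -> exists e', E0 N Q e' /\ e' `<=` e.
Proof.
move=> [g [[f [T [Qf _ _ ->]]] /cong_form [h [v [Hh ->]]]]].
exists ((fun x => h x + v) @` f); split.
  by exists f; split => //; exists h, v; split => //; left.
by apply: image_subset => x fx; left.
Qed.

Lemma Et_of (t : nat) (e T : set V) : E0 N Q e -> e `&` T = set0 -> has_card T t ->
  Et N Q t (e `|` T).
Proof.
move=> [f [Qf /cong_form [h [v [Hh ->]]]]] HeT [s [us ss HT]]; subst T.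
have [s' Hs'] : exists s', map (fun x => h x + v) s' = s.
  elim: s {us ss HeT} => [|y s [s' Hs']]; first by exists [::].
  case: (Hh) => _ surj _; have [x hx] := surj (y - v).
  by exists (x :: s'); rewrite /= Hs' hx subrK.
exists (f `|` [set` s']); split; last first.
  exists h, v; split => //; left.
  rewrite image_setU; congr (_ `|` _); rewrite -Hs'.
  apply/seteqP; split => y /=.
    by move=> /mapP [x xs ->]; exists x.
  by move=> [x xs <-]; apply: map_f.
exists f, [set` s']; split => //.
  apply/seteqP; split => x // [fx /= xs].
  suff : ((fun x => h x + v) @` f `&` [set` s]) (h x + v) by rewrite HeT.
  split; first by exists x.
  by rewrite /= -Hs'; apply: (map_f (fun x => h x + v)).
exists s'; split => //.
  by move: us; rewrite -Hs' => /map_uniq.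
by rewrite -ss -Hs' size_map.
Qed.

Lemma inf_card (A : set V) (t : nat) : infinite_set A ->
  exists T, T `<=` A /\ has_card T t.
Proof.
move=> HA; elim: t => [|t [T [TA [s [us ss HT]]]]]; last subst T.
  by exists [set` [::]]; split => //; exists [::].
have /infinite_setN0 [x [Ax xs]] := infinite_setD HA (finite_seq s).
exists [set` (x :: s)]; split.
  by move=> y /=; rewrite in_cons => /orP [/eqP ->//|/TA].
exists (x :: s); split => //=; last by rewrite ss.
by rewrite us andbT; apply/negP.
Qed.

Lemma avoid_fin (X : set V) : (0 < d)%N -> finite_set X -> exists w, ~ X w.
Proof.
move=> d0 fX; apply: contrapT => Hn.
pose i0 : 'I_d := Ordinal d0.
pose g := fun n : nat => (n%:R : R) *: (const_mx 1 : V).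
have ginj : {in [set: nat] &, injective g}.
  move=> m n _ _ /matrixP /(_ ord0 i0); rewrite !mxE !mulr1.
  by move/eqP; rewrite eqr_nat => /eqP.
have : finite_set (g @` [set: nat]).
  apply: sub_finite_set fX => y _; apply: contrapT => Xy; apply: Hn; by exists y.
by rewrite (eq_finite_set (inj_card_eq ginj)); apply: infinite_nat.
Qed.

End Geo.

Theorem theorem4p4 (R : realType) (d : nat) (N : 'rV[R]_d -> R)
  (Q : set (set 'rV[R]_d)) :
  is_norm N ->
  (forall f, Q f -> finite_set f /\ exists x y, [/\ f x, f y & x <> y]) ->
  (exists k : nat, colorable (E0 N Q) k) ->
  forall t : nat, (0 < t)%N ->
  forall n : nat, chromatic_number_is (E0 N Q) n ->
  chromatic_number_is (Et N Q t) n.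
Proof.
move=> _ HQ _ t _ n [Hcol Hmin].
have HQfin : forall f, Q f -> finite_set f by move=> f /HQ [].
have HQne : forall f, Q f -> exists x, f x.
  by move=> f /HQ [_ [x [y [fx _ _]]]]; exists x.
split.
  case: Hcol => c Hc; exists c => e Ee [i Hi].
  have [e' [E0e' sub]] := Et_sub Ee.
  by apply: (Hc e' E0e'); exists i => x /sub /Hi.
move=> m [c Hc]; apply: Hmin.
case: m c Hc => [|m] c Hc; first by case: (c 0).
apply: contrapT => Hn.
have [e0 E0e0] : exists e, E0 N Q e.
  apply: contrapT => He; apply: Hn; exists (fun _ => ord0) => e Ee.
  by exfalso; apply: He; exists e.
have d0 : (0 < d)%N.
  move: E0e0 => [f [/HQ [_ [x [y [_ _ xy]]]] _]].
  rewrite lt0n; apply/negP => /eqP dz; apply: xy; apply/matrixP => i j.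
  have : forall k : nat, (k < d)%N -> False by move=> k; rewrite dz.
  by move=> /(_ j (ltn_ord j)).
have Efin : forall e, E0 N Q e -> exists s : seq 'rV[R]_d, e `<=` [set` s].
  by move=> e /(E0_fin HQfin) /finite_seqP [s ->]; exists s.
have [s Hs] : exists s : seq 'rV[R]_d, forall c' : 'rV[R]_d -> 'I_m.+1,
    ~ (forall e, E0 N Q e -> e `<=` [set` s] ->
         ~ (exists i, forall x, e x -> c' x = i)).
  apply: contrapT => H; apply: Hn; apply: (@compactness _ m.+1 (E0 N Q) Efin) => s.
  apply: contrapT => H2; apply: H; exists s => c' H3; apply: H2; by exists c'.
pose F := \bigcup_(j in [set j : 'I_m.+1 | finite_set [set y | c y = j]])
           [set y | c y = j].
have fF : finite_set F by apply: bigcup_finite => //; exact: finite_finset.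
pose X := \bigcup_(x in [set` s]) ((fun y => y - x) @` F).
have fX : finite_set X.
  by apply: bigcup_finite => // x _; apply: finite_image.
have [w Hw] := @avoid_fin _ _ X d0 fX.
apply: (Hs (fun x => c (x + w))) => e E0e es [i Hi].
pose e' := (fun x => x + w) @` e.
have E0e' : E0 N Q e' := E0_trans w E0e.
have [p ep] := E0_ne HQne E0e.
have Hinf : infinite_set [set y | c y = i].
  move=> fin; apply: Hw; exists p; first exact: es ep.
  exists (p + w); first by exists i => //; exact: Hi ep.
  by rewrite /= addrAC subrr add0r.
have fe' : finite_set e'.
  by apply: finite_image; apply: sub_finite_set es (finite_seq s).
have [T [TA HT]] := @inf_card _ _ _ t (infinite_setD Hinf fe').
apply: (Hc (e' `|` T)).
  apply: Et_of => //; apply/seteqP; split => y // [e'y Ty].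
  by case: (TA y Ty).
exists i => y [[x ex <-]|Ty]; first exact: Hi ex.
by case: (TA y Ty).
Qed.
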